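(* Let $G=(V,E)$ be a directed acyclic graph with real edge weights, let $s_1,t_1,s_2,t_2\in V$, and let $E_\cap=E(s_1,t_1)\cap E(s_2,t_2)$. Let $(P_1,P_2)\in\Pi(s_1,t_1)\times\Pi(s_2,t_2)$ and let $x,y\in V$ be such that $x$ precedes $y$ on both $P_1$ and $P_2$. Then all edges of the subpaths $P_1[x,y]$ and $P_2[x,y]$ belong to $E_\cap$.
   Context: $\Pi(x,y)$ is the set of shortest (minimum weight) paths from $x$ to $y$; $E(x,y)$ is the set of edges lying on at least one path in $\Pi(x,y)$. For a path $P$, $x$ precedes $y$ on $P$ if $x=y$ or $x$ appears before $y$; $P[x,y]$ is the subpath from $x$ to $y$. *)

(* Defs.v *)
From mathcomp Require Import all_boot all_order all_algebra.
Set Implicit Arguments. Unset Strict Implicit. Unset Printing Implicit Defensive.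
Import Order.TTheory GRing.Theory Num.Theory.
Local Open Scope ring_scope.

Section Graphs.
Variables (T : finType) (R : realDomainType) (e : rel T) (w : T -> T -> R).

Definition acyclic : Prop :=
  forall (x : T) (p : seq T), path e x p -> last x p = x -> p = [::].

Definition is_path (s t : T) (P : seq T) : bool :=
  if P is x :: p then [&& x == s, path e x p & last x p == t] else false.

Definition pedges (P : seq T) : seq (T * T) := zip P (behead P).

Definition pweight (P : seq T) : R := \sum_(uv <- pedges P) w uv.1 uv.2.

Definition is_shortest (s t : T) (P : seq T) : Prop :=
  is_path s t P /\ forall Q, is_path s t Q -> pweight P <= pweight Q.

Definition Eset (s t : T) (uv : T * T) : Prop :=
  exists P, is_shortest s t P /\ uv \in pedges P.

Definition precedes (x y : T) (P : seq T) : bool :=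
  [&& x \in P, y \in P & index x P <= index y P]%N.

Definition subpath (P : seq T) (x y : T) : seq T :=
  drop (index x P) (take (index y P).+1 P).

End Graphs.

(* Main.v *)
Require Import Defs.
From mathcomp Require Import all_boot all_order all_algebra.
Import Order.TTheory GRing.Theory Num.Theory.
Local Open Scope ring_scope.

Set Implicit Arguments. Unset Strict Implicit.
Section Aux.
Variables (T : finType) (R : realDomainType) (e : rel T) (w : T -> T -> R).

Lemma pedges_cons_cat (h : T) p q :
  pedges (h :: p ++ q) = pedges (h :: p) ++ pedges (last h p :: q).
Proof. by elim: p h => [|z p IH] h //=; rewrite -IH. Qed.

Lemma pedges_mid (a : seq T) x r :
  pedges (a ++ x :: r) = pedges (rcons a x) ++ pedges (x :: r).
Proof.
case: a => [|z a] //=.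
rewrite pedges_cons_cat -cats1 pedges_cons_cat -catA.
by [].
Qed.

Lemma pedges_split (A : seq T) x m B :
  pedges (A ++ x :: m ++ B) =
  pedges (rcons A x) ++ pedges (x :: m) ++ pedges (last x m :: B).
Proof. by rewrite pedges_mid pedges_cons_cat. Qed.

Lemma pweight_split (A : seq T) x m B :
  pweight w (A ++ x :: m ++ B) =
  pweight w (rcons A x) + pweight w (x :: m) + pweight w (last x m :: B).
Proof. by rewrite /pweight pedges_split !big_cat /= addrA. Qed.

Lemma is_path_splice s t (A : seq T) x m m' B :
  is_path e s t (A ++ x :: m ++ B) -> path e x m' -> last x m' = last x m ->
  is_path e s t (A ++ x :: m' ++ B).
Proof.
move=> H pm' lm.
case: A H => [|z A] /=.
  case/and3P=> hs; rewrite !cat_path !last_cat => /andP[_ hB] ht.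
  by rewrite hs pm' lm hB ht.
case/and3P=> hs; rewrite !cat_path !last_cat /= !cat_path !last_cat.
move=> /and3P[hA he /andP[_ hB]] ht.
by rewrite hs hA he pm' lm hB ht.
Qed.

Lemma is_path_mid s t (A : seq T) x m B :
  is_path e s t (A ++ x :: m ++ B) -> path e x m.
Proof.
case: A => [|z A] /=.
  by case/and3P=> _; rewrite cat_path => /andP[].
by case/and3P=> _; rewrite cat_path /= cat_path => /and3P[_ _ /andP[? _]].
Qed.

Lemma decomp (P : seq T) x y : precedes x y P ->
  exists A m B, [/\ P = A ++ x :: m ++ B, last x m = y & subpath P x y = x :: m].
Proof.
case/and3P=> xP yP ixy.
have iyP : (index y P < size P)%N by rewrite index_mem.
have ixP : (index x P < size P)%N by rewrite index_mem.
have Ht : take (index y P).+1 P = rcons (take (index y P) P) y.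
  by rewrite (take_nth y iyP) nth_index.
set S := subpath P x y.
have HS : S = rcons (drop (index x P) (take (index y P) P)) y.
  rewrite /S /subpath Ht drop_rcons // size_take.
  by case: ifP => // _; apply: leq_trans ixy (ltnW iyP).
have Hh : nth y S 0 = x.
  rewrite /S /subpath nth_drop addn0 nth_take; last by rewrite ltnS.
  by rewrite nth_index.
case ES: S Hh => [|z m] //= Hz.
  by move: ES; rewrite HS; case: (drop _ _).
rewrite Hz in ES.
exists (take (index x P) P), m, (drop (index y P).+1 P).
split => //.
  rewrite -cat_cons -ES /S /subpath.
  rewrite -{1}(cat_take_drop (index y P).+1 P).
  rewrite -{1}(cat_take_drop (index x P) (take (index y P).+1 P)).
  by rewrite take_takel ?(leqW ixy) // catA.
- have : last x (x :: m) = y by rewrite -ES HS last_rcons.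
  by [].
- by rewrite Hz.
Qed.

End Aux.

Theorem lemma17 (T : finType) (R : realDomainType) (e : rel T) (w : T -> T -> R)
    (s1 t1 s2 t2 : T) (P1 P2 : seq T) (x y : T) :
  acyclic e ->
  is_shortest e w s1 t1 P1 ->
  is_shortest e w s2 t2 P2 ->
  precedes x y P1 -> precedes x y P2 ->
  forall uv : T * T,
    (uv \in pedges (subpath P1 x y)) || (uv \in pedges (subpath P2 x y)) ->
    Eset e w s1 t1 uv /\ Eset e w s2 t2 uv.
Proof.
move=> _ [p1 sh1] [p2 sh2] pr1 pr2 uv.
have [A1 [m1 [B1 [E1 l1 S1]]]] := decomp pr1.
have [A2 [m2 [B2 [E2 l2 S2]]]] := decomp pr2.
rewrite S1 S2.
subst P1 P2.
have pm1 := is_path_mid p1.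
have pm2 := is_path_mid p2.
have q1 : is_path e s1 t1 (A1 ++ x :: m2 ++ B1).
  by apply: is_path_splice p1 pm2 _; rewrite l1 l2.
have q2 : is_path e s2 t2 (A2 ++ x :: m1 ++ B2).
  by apply: is_path_splice p2 pm1 _; rewrite l1 l2.
have h1 := sh1 _ q1. have h2 := sh2 _ q2.
move: h1 h2; rewrite !pweight_split l1 l2 => h1 h2.
have le12 : pweight w (x :: m1) <= pweight w (x :: m2) by rewrite lerD2r lerD2l in h1.
have le21 : pweight w (x :: m2) <= pweight w (x :: m1) by rewrite lerD2r lerD2l in h2.
have eqw : pweight w (x :: m1) = pweight w (x :: m2) by apply/eqP; rewrite eq_le le12.
have sq1 : is_shortest e w s1 t1 (A1 ++ x :: m2 ++ B1).
  split => // Q HQ; apply: le_trans (sh1 Q HQ).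
  by rewrite !pweight_split l1 l2 eqw.
have sq2 : is_shortest e w s2 t2 (A2 ++ x :: m1 ++ B2).
  split => // Q HQ; apply: le_trans (sh2 Q HQ).
  by rewrite !pweight_split l1 l2 eqw.
have inE A m B : uv \in pedges (x :: m) -> uv \in pedges (A ++ x :: m ++ B).
  by move=> H; rewrite pedges_split !mem_cat H orbT.
have sp1 : is_shortest e w s1 t1 (A1 ++ x :: m1 ++ B1) by split.
have sp2 : is_shortest e w s2 t2 (A2 ++ x :: m2 ++ B2) by split.
case/orP=> H.
  split.
    by exists (A1 ++ x :: m1 ++ B1); split => //; apply: inE.
  by exists (A2 ++ x :: m1 ++ B2); split => //; apply: inE.
split.
  by exists (A1 ++ x :: m2 ++ B1); split => //; apply: inE.
by exists (A2 ++ x :: m2 ++ B2); split => //; apply: inE.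
Qed.
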